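(* Let $R$ be a ring and $\mathfrak a\in \mathrm{Ass}_l(R)$. Then: (1) The set $\mathrm{Den}_l(R,\mathfrak a)$ is an ordered abelian semigroup under the product $S_1S_2:=\langle S_1,S_2\rangle$ (the multiplicative subsemigroup of $(R,\cdot)$ generated by $S_1$ and $S_2$); that is, for $S_1,S_2,S_3\in \mathrm{Den}_l(R,\mathfrak a)$ we have $S_1S_2\in \mathrm{Den}_l(R,\mathfrak a)$, $S_1S_2=S_2S_1$, and $S_1\subseteq S_2$ implies $S_1S_3\subseteq S_2S_3$. (2) The set $S_{\mathfrak a}(R):=\bigcup_{S\in \mathrm{Den}_l(R,\mathfrak a)}S$ belongs to $\mathrm{Den}_l(R,\mathfrak a)$, and hence is the largest element of $(\mathrm{Den}_l(R,\mathfrak a),\subseteq)$. (3) If $S_i\in \mathrm{Den}_l(R,\mathfrak a)$ for $i\in I$, where $I$ is an arbitrary non-empty set, then $\langle S_i\mid i\in I\rangle:=\bigcup_{\emptyset\neq J\subseteq I,\ |J|<\infty}\prod_{j\in J}S_j$ belongs to $\mathrm{Den}_l(R,\mathfrak a)$ and is the least upper bound of $\{S_i\}_{i\in I}$ in $(\mathrm{Den}_l(R,\mathfrak a),\subseteq)$.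
   Context: Rings are associative with $1$. A multiplicatively closed subset $S$ of a ring $R$ is a subset with $1\in S$, $0\notin S$ and $st\in S$ for all $s,t\in S$. It is a left Ore set if $Sr\cap Rs\neq\emptyset$ for all $r\in R$, $s\in S$. For a left Ore set $S$, $\mathrm{ass}(S):=\{r\in R\mid sr=0 \text{ for some } s\in S\}$ (an ideal of $R$). A left Ore set $S$ is a left denominator set if whenever $rs=0$ with $r\in R$, $s\in S$, there is $t\in S$ with $tr=0$ (equivalently, the left localization $S^{-1}R$ exists). $\mathrm{Den}_l(R)$ is the set of left denominator sets of $R$, $\mathrm{Ass}_l(R):=\{\mathrm{ass}(S)\mid S\in \mathrm{Den}_l(R)\}$, and for an ideal $\mathfrak a\in\mathrm{Ass}_l(R)$, $\mathrm{Den}_l(R,\mathfrak a):=\{S\in \mathrm{Den}_l(R)\mid \mathrm{ass}(S)=\mathfrak a\}$. *)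

(* Defs.v *)
From mathcomp Require Import all_boot all_algebra.
Set Implicit Arguments. Unset Strict Implicit. Unset Printing Implicit Defensive.
Import GRing.Theory.
Local Open Scope ring_scope.

Section Den.
Variable R : pzRingType.

Definition subsetR (A B : R -> Prop) : Prop := forall x, A x -> B x.
Definition eqsetR (A B : R -> Prop) : Prop := forall x, A x <-> B x.

Definition mult_closed (S : R -> Prop) : Prop :=
  S 1 /\ ~ S 0 /\ (forall s t, S s -> S t -> S (s * t)).

Definition left_Ore (S : R -> Prop) : Prop :=
  mult_closed S /\
  (forall r s, S s -> exists s' r', S s' /\ s' * r = r' * s).

Definition ass (S : R -> Prop) : R -> Prop :=
  fun r => exists s, S s /\ s * r = 0.

Definition left_den (S : R -> Prop) : Prop :=
  left_Ore S /\
  (forall r s, S s -> r * s = 0 -> exists t, S t /\ t * r = 0).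

Definition Den_l_a (a : R -> Prop) (S : R -> Prop) : Prop :=
  left_den S /\ eqsetR (ass S) a.

Definition Ass_l (a : R -> Prop) : Prop := exists S, Den_l_a a S.

Inductive gen_semigroup (X : R -> Prop) : R -> Prop :=
| gen_in : forall x, X x -> gen_semigroup X x
| gen_mul : forall x y,
    gen_semigroup X x -> gen_semigroup X y -> gen_semigroup X (x * y).

Definition den_prod (S1 S2 : R -> Prop) : R -> Prop :=
  gen_semigroup (fun x => S1 x \/ S2 x).

Definition S_a (a : R -> Prop) : R -> Prop :=
  fun x => exists S, Den_l_a a S /\ S x.

Definition den_join (I : Type) (S : I -> R -> Prop) : R -> Prop :=
  gen_semigroup (fun x => exists i, S i x).

End Den.

(* Main.v *)
Require Import Defs.
From mathcomp Require Import all_boot all_algebra.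
Local Open Scope ring_scope.
Import GRing.Theory.

Section Main.
Variable R : pzRingType.
Variable a : R -> Prop.

Lemma den_transfer (S T : R -> Prop) : eqsetR S T -> Den_l_a a S -> Den_l_a a T.
Proof.
move=> E [[[[S1 [S0 SM]] oreS] denS] assS].
split; [split; [split; [split; [|split]|]|]|].
- by apply/(E _).
- by move=> /(E _).
- by move=> s t /(E _) Hs /(E _) Ht; apply/(E _); apply: SM.
- move=> r s /(E _) Ss; case: (oreS r s Ss) => s' [r' [Ss' e]].
  by exists s', r'; split=> //; apply/(E _).
- move=> r s /(E _) Ss e; case: (denS r s Ss e) => t [St e'].
  by exists t; split=> //; apply/(E _).
- move=> r; split.
  + by case=> s [/(E _) Ss e]; apply/(assS _); exists s.
  + by move=> /(assS _) [s [Ss e]]; exists s; split=> //; apply/(E _).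
Qed.

Lemma main (X S0 : R -> Prop) : Den_l_a a S0 -> subsetR S0 X ->
  (forall x, X x -> exists S, Den_l_a a S /\ S x /\ subsetR S X) ->
  Den_l_a a (gen_semigroup X).
Proof.
move=> D0 sub HX.
case: D0 => [[[[S01 [S00 S0M]] _] _] ass0].
have T1 : gen_semigroup X 1 by apply: gen_in; apply: sub.
have Q : forall t, gen_semigroup X t -> forall r, a (t * r) -> a r.
  move=> t; elim=> [x Xx|x y _ IHx _ IHy] r.
  - case: (HX x Xx) => S [[[[[_ [_ SM]] _] _] assS] [Sx _]].
    move=> /(assS _) [u [Su e]]. apply/(assS _). exists (u*x); split; first exact: SM.
    by rewrite -mulrA.
  - by rewrite -mulrA => /IHx; apply: IHy.
have assT : eqsetR (ass (gen_semigroup X)) a.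
  move=> r; split.
  - case=> t [Tt e]. apply: (Q t Tt). rewrite e. apply/(ass0 _). exists 1; split=>//.
    by rewrite mulr0.
  - move=> /(ass0 _) [u [Su e]]. exists u; split=>//. apply: gen_in; exact: sub.
have T0 : ~ gen_semigroup X 0.
  move=> T0. have : a 1 by apply/(assT _); exists 0; split=>//; rewrite mul0r.
  move=> /(ass0 _) [u [Su e]]. rewrite mulr1 in e. by rewrite e in Su.
have TM : forall s t, gen_semigroup X s -> gen_semigroup X t -> gen_semigroup X (s*t).
  by move=> s t; apply: gen_mul.
split; last exact: assT.
split; first split; first by [].
- move=> r t Tt; elim: Tt r => [x Xx|x y Tx IHx Ty IHy] r.
  + case: (HX x Xx) => S [[[[_ oreS] _] _] [Sx subS]].
    case: (oreS r x Sx) => s' [r' [Ss' e]]. exists s', r'; split=>//.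
    by apply: gen_in; apply: subS.
  + case: (IHy r) => u1 [v1 [Tu1 e1]]. case: (IHx v1) => u2 [v2 [Tu2 e2]].
    exists (u2*u1), v2; split; first exact: TM.
    by rewrite -mulrA e1 mulrA e2 mulrA.
- move=> r t Tt; elim: Tt r => [x Xx|x y Tx IHx Ty IHy] r e.
  + case: (HX x Xx) => S [[[_ denS] _] [Sx subS]].
    case: (denS r x Sx e) => u [Su e']. exists u; split=>//.
    by apply: gen_in; apply: subS.
  + rewrite mulrA in e. case: (IHy _ e) => t1 [Tt1 e1]. rewrite mulrA in e1.
    case: (IHx _ e1) => t2 [Tt2 e2]. exists (t2*t1); split; first exact: TM.
    by rewrite -mulrA.
Qed.

End Main.
Arguments main {R a X S0}.
Arguments den_transfer {R a S T}.

Theorem theorem2p1 (R : pzRingType) (a : R -> Prop) (Ha : Ass_l a) :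
  (* (1) *)
  (forall S1 S2 S3 : R -> Prop,
      Den_l_a a S1 -> Den_l_a a S2 -> Den_l_a a S3 ->
      Den_l_a a (den_prod S1 S2) /\
      eqsetR (den_prod S1 S2) (den_prod S2 S1) /\
      (subsetR S1 S2 -> subsetR (den_prod S1 S3) (den_prod S2 S3))) /\
  (* (2) *)
  (Den_l_a a (S_a a) /\
   (forall S : R -> Prop, Den_l_a a S -> subsetR S (S_a a))) /\
  (* (3) *)
  (forall (I : Type) (S : I -> R -> Prop),
      inhabited I ->
      (forall i, Den_l_a a (S i)) ->
      Den_l_a a (den_join S) /\
      (forall i, subsetR (S i) (den_join S)) /\
      (forall T : R -> Prop, Den_l_a a T ->
         (forall i, subsetR (S i) T) -> subsetR (den_join S) T)).
Proof.
split; [|split].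
- move=> S1 S2 S3 D1 D2 D3; split; [|split].
  + apply: (main D1) => [x H|x [H|H]]; first by left.
    * by exists S1; split=> //; split=> // y Hy; left.
    * by exists S2; split=> //; split=> // y Hy; right.
  + move=> x; split; elim=> [y [H|H]|y z _ IH1 _ IH2];
      try (by apply: gen_in; (left + right)); by apply: gen_mul.
  + move=> sub x; elim=> [y [H|H]|y z _ IH1 _ IH2]; last by apply: gen_mul.
    * by apply: gen_in; left; apply: sub.
    * by apply: gen_in; right.
- have Dg : Den_l_a a (gen_semigroup (S_a a)).
    case: Ha => S0 D0. apply: (main D0).
    + by move=> x Sx; exists S0.
    + move=> x [S [DS Sx]]; exists S; split=> //; split=> // y Sy; by exists S.
  split.
  + apply: (den_transfer _ Dg) => x; split.
    * by move=> gx; exists (gen_semigroup (S_a a)).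
    * by move=> H; apply: gen_in.
  + by move=> S DS x Sx; exists S.
- move=> I S [i0] DS.
  have D : Den_l_a a (den_join S).
    apply: (main (DS i0)).
    + by move=> x H; exists i0.
    + move=> x [i Hi]; exists (S i); split=> //; split=> // y Hy; by exists i.
  split; first exact: D. split.
  + by move=> i x H; apply: gen_in; exists i.
  + move=> T DT sub x; elim=> [y [i Hi]|y z _ IH1 _ IH2]; first exact: (sub i y Hi).
    case: DT => [[[[_ [_ TM]] _] _] _]; exact: TM.
Qed.
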